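(* For every $l\ge1$ and every positive integer $K$, and every $\varepsilon>0$, for all sufficiently large $n$ we have $f(n)\ge f_q(n)\ge (c'_{l,K}-\varepsilon)^n$, where $q=p_{l+1}$. Consequently $\liminf_{n\to\infty} f(n)^{1/n}\ge c'_{l,K}$.
   Context: A set of positive integers is primitive if no element divides another. $f(n)$ is the number of $n$-element primitive subsets of $\{1,\dots,2n\}$, and $f_q(n)$ is the number of $n$-element primitive subsets of $(2n/q,2n]\cap\mathbb Z$. Let $p_1<p_2<\dots$ be the primes and $q=p_{l+1}$. $M_l$ is the set of positive integers all of whose prime factors lie in $\{p_1,\dots,p_l\}$, $M_l(x)=\{m\in M_l:m\le x\}$ ordered by divisibility. $r'_l(i)$ is the number of maximum-size antichains of $M_l(i)$ all of whose elements lie in $(i/q,i]$, and $c'_{l,K}=\prod_{i=1}^K r'_l(i)^{\frac{2}{i(i+1)}\prod_{j=1}^l(1-1/p_j)}$. *)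

(* Defs.v *)
From Stdlib Require Import Reals.
From mathcomp Require Import all_boot.

Set Implicit Arguments.
Unset Strict Implicit.
Unset Printing Implicit Defensive.

(* ---------- primes, 0-indexed: nthp 0 = 2, nthp 1 = 3, ... ----------
   So p_j (1-indexed, as in the paper) = nthp (j-1), the first l primes are
   nthp 0, ..., nthp (l-1), and q = p_{l+1} = nthp l. *)
Lemma exists_prime_above (m : nat) : exists p, (m < p) && prime p.
Proof. case: (prime_above m) => p H1 H2; exists p; by rewrite H1 H2. Qed.

Definition next_prime (m : nat) : nat := ex_minn (exists_prime_above m).

Fixpoint nthp (k : nat) : nat :=
  match k with
  | 0 => 2
  | k'.+1 => next_prime (nthp k')
  end.

Definition primitive_set (N : nat) (A : {set 'I_N.+1}) : bool :=
  [forall x in A, 0 < (x : nat)] &&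
  [forall x in A, forall y in A, (x != y) ==> ~~ ((x : nat) %| y)].

Definition prim_count (N : nat) (P : nat -> bool) (k : nat) : nat :=
  #|[set A : {set 'I_N.+1} |
      [&& primitive_set A, #|A| == k & [forall x in A, P x]]]|.

Definition fP (n : nat) : nat := prim_count n.*2 (fun _ => true) n.

(* f_q(n): n-element primitive subsets of (2n/q, 2n] ∩ Z;
   for integer m, 2n/q < m  <->  2n < q*m  (q > 0). *)
Definition fqP (q n : nat) : nat := prim_count n.*2 (fun m => n.*2 < q * m) n.

Definition inM (l m : nat) : bool :=
  (0 < m) && all (fun p => has (fun j => p == nthp j) (iota 0 l)) (primes m).

Definition antichainM (l i : nat) (A : {set 'I_i.+1}) : bool :=
  [forall x in A, inM l x] &&
  [forall x in A, forall y in A, (x != y) ==> ~~ ((x : nat) %| y)].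

Definition max_antichain_size (l i : nat) : nat :=
  \max_(A : {set 'I_i.+1} | antichainM l A) #|A|.

Definition r' (l i : nat) : nat :=
  #|[set A : {set 'I_i.+1} |
      [&& antichainM l A, #|A| == max_antichain_size l i &
          [forall x in A, i < nthp l * x]]]|.

Local Open Scope R_scope.

(* x^y for x >= 0 and y > 0, with the convention 0^y = 0
   (Stdlib's Rpower would give 0^y = 1). *)
Definition rpow0 (x y : R) : R :=
  if Req_EM_T x 0 then 0 else Rpower x y.

Fixpoint prodR1 (F : nat -> R) (n : nat) : R :=
  match n with
  | O => 1
  | S k => prodR1 F k * F (S k)
  end.

Definition euler_factor (l : nat) : R :=
  prodR1 (fun j => 1 - / INR (nthp (j - 1))) l.

Definition c' (l K : nat) : R :=
  prodR1 (fun i => rpow0 (INR (r' l i))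
                         (2 / (INR i * (INR i + 1)) * euler_factor l)) K.

(* Main.v *)
Require Import Defs.
From Stdlib Require Import Reals.
From mathcomp Require Import all_boot.
From Stdlib Require Import Lra.
From mathcomp Require Import zify.
Set Implicit Arguments. Unset Strict Implicit. Unset Printing Implicit Defensive.


Lemma next_primeP m : (m < next_prime m) && prime (next_prime m).
Proof. rewrite /next_prime; by case: ex_minnP. Qed.

Lemma next_prime_min m p : m < p -> prime p -> next_prime m <= p.
Proof. move=> h1 h2; rewrite /next_prime; case: ex_minnP => x _ H; apply: H; by rewrite h1 h2. Qed.

Lemma nthp_prime k : prime (nthp k).
Proof. case: k => [|k] //=; by case/andP: (next_primeP (nthp k)). Qed.

Lemma nthp_ltS k : nthp k < nthp k.+1.
Proof. by case/andP: (next_primeP (nthp k)). Qed.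

Lemma nthp_mono j k : j < k -> nthp j < nthp k.
Proof.
elim: k => // k IH; rewrite ltnS leq_eqVlt => /orP [/eqP ->|/IH h]; first exact: nthp_ltS.
exact: ltn_trans h (nthp_ltS k).
Qed.

Lemma nthp_ge2 k : 2 <= nthp k.
Proof. exact: prime_gt1 (nthp_prime k). Qed.

Definition piL (l : nat) : nat_pred := [pred p | has (fun j => p == nthp j) (iota 0 l)].

Lemma in_piL l p : (p \in piL l) = [exists j : 'I_l, p == nthp j].
Proof.
rewrite inE /=; apply/hasP/existsP => [[j]|[j /eqP->]].
  rewrite mem_iota /= => hj /eqP ->; by exists (Ordinal hj).
by exists (val j) => //; rewrite mem_iota /=.
Qed.

Lemma nthp_in_piL j l : j < l -> nthp j \in piL l.
Proof. move=> h; rewrite in_piL; apply/existsP; by exists (Ordinal h). Qed.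

Lemma notpi_ge l p : prime p -> p \notin piL l -> nthp l <= p.
Proof.
move=> pp; elim: l => [|l IH] h; first by exact: prime_gt1 pp.
have h1 : p \notin piL l.
  apply: contra h; rewrite !in_piL => /existsP [j hj]; apply/existsP.
  by exists (widen_ord (leqnSn l) j).
have h2 : p != nthp l.
  apply: contra h => /eqP ->; exact: nthp_in_piL.
have : nthp l < p by rewrite ltn_neqAle eq_sym h2 IH.
move=> lt; exact: next_prime_min.
Qed.

Lemma inM_pnat l m : inM l m = (piL l).-nat m.
Proof. by []. Qed.


Definition Di (l i : nat) : {set 'I_i.+1} :=
  [set a : 'I_i.+1 | (piL l).-nat a & i < 2 * a].

Lemma two_in_piL l : 0 < l -> 2 \in piL l.
Proof. move=> h; have -> : 2 = nthp 0 by []; exact: nthp_in_piL. Qed.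

Lemma Di_antichain l i : antichainM l (Di l i).
Proof.
apply/andP; split; apply/forallP => x; apply/implyP; rewrite inE => /andP[hx1 hx2] //.
apply/forallP => y; apply/implyP; rewrite inE => /andP[hy1 hy2]; apply/implyP => hne.
apply/negP => /dvdnP [k hk].
have y0 : 0 < (y : nat) by case/andP: hy1.
have hy : (y : nat) <= i by rewrite -ltnS ltn_ord.
case: k hk => [|[|k]] hk.
- by rewrite hk in y0.
- by move: hne; rewrite -(inj_eq val_inj) /= hk mul1n eqxx.
- have : 2 * x <= y by rewrite hk; nia.
  lia.
Qed.

Lemma antichain_le l i (A : {set 'I_i.+1}) : 0 < l -> antichainM l A -> #|A| <= #|Di l i|.
Proof.
move=> l0 /andP [hM hA].
pose g (a : 'I_i.+1) : 'I_i.+1 := inord (a * 2 ^ (trunc_log 2 (i %/ a))).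
have key : forall a : 'I_i.+1, a \in A ->
   [/\ (a : nat) * 2 ^ (trunc_log 2 (i %/ a)) <= i,
       i < 2 * ((a : nat) * 2 ^ (trunc_log 2 (i %/ a))) &
       (piL l).-nat (a * 2 ^ (trunc_log 2 (i %/ a)))].
  move=> a aA; have pa : (piL l).-nat a by move/forallP: hM => /(_ a) /implyP /(_ aA).
  have a0 : 0 < (a : nat) by case/andP: pa.
  have ai : (a : nat) <= i by rewrite -ltnS ltn_ord.
  have ia0 : 0 < i %/ a by rewrite divn_gt0.
  have h1 := trunc_logP (isT : 1 < 2) ia0.
  have h2 := trunc_log_ltn (i %/ a) (isT : 1 < 2).
  split.
  - by rewrite mulnC -leq_divRL.
  - move: h2; rewrite ltn_divLR // expnS; nia.
  - rewrite pnatM pa /= pnatX; apply/orP; left.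
    by rewrite pnatE // two_in_piL.
have gval : forall a, a \in A -> (g a : nat) = a * 2 ^ (trunc_log 2 (i %/ a)).
  move=> a aA; rewrite inordK //; by case: (key a aA).
have inj : {in A &, injective g}.
  move=> a b aA bA; move/(congr1 (@nat_of_ord _)); rewrite !gval //.
  set ka := trunc_log _ _; set kb := trunc_log _ _ => e.
  have anti : forall x y : 'I_i.+1, x \in A -> y \in A -> (x : nat) %| y -> x = y.
    move=> x y xA yA d; apply/eqP; apply: contraLR d => ne.
    by move/forallP: hA => /(_ x) /implyP /(_ xA) /forallP /(_ y) /implyP /(_ yA) /implyP /(_ ne).
  case: (leqP ka kb) => hk.
  - have E : 2 ^ kb = 2 ^ (kb - ka) * 2 ^ ka by rewrite -expnD subnK.
    apply: esym; apply: anti => //; apply/dvdnP; exists (2 ^ (kb - ka)).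
    apply/eqP; rewrite -(eqn_pmul2r (expn_gt0 2 ka)) e E mulnA [b * _]mulnC //.
  - have E : 2 ^ ka = 2 ^ (ka - kb) * 2 ^ kb by rewrite -expnD subnK //; exact: ltnW.
    apply: anti => //; apply/dvdnP; exists (2 ^ (ka - kb)).
    apply/eqP; rewrite -(eqn_pmul2r (expn_gt0 2 kb)) -e E mulnA [a * _]mulnC //.
rewrite -(card_in_imset inj); apply: subset_leq_card; apply/subsetP => _ /imsetP [a aA ->].
rewrite inE gval //; by case: (key a aA) => _ -> ->.
Qed.

Lemma max_antichain_Di l i : 0 < l -> max_antichain_size l i = #|Di l i|.
Proof.
move=> l0; apply/eqP; rewrite eqn_leq; apply/andP; split.
- apply/bigmax_leqP => A hA; exact: antichain_le.
- rewrite /max_antichain_size; apply: (@leq_bigmax_cond _ (fun A => antichainM l A) (fun A => #|A|)); exact: Di_antichain.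
Qed.


Lemma part_split (pi : nat_pred) a b : pi.-nat a -> pi^'.-nat b ->
  (a * b)`_pi = a /\ (a * b)`_pi^' = b.
Proof.
move=> ha hb; have a0 : 0 < a by case/andP: ha.
have b0 : 0 < b by case/andP: hb.
rewrite !partnM // part_pnat_id // part_p'nat // muln1; split => //.
rewrite (part_pnat_id hb) part_p'nat ?mul1n //; by rewrite pnatNK.
Qed.

Lemma factor_uniq (pi : nat_pred) a b a' b' : pi.-nat a -> pi^'.-nat b ->
  pi.-nat a' -> pi^'.-nat b' -> a * b = a' * b' -> a = a' /\ b = b'.
Proof.
move=> ha hb ha' hb' e.
case: (part_split ha hb) => h1 h2; case: (part_split ha' hb') => h3 h4.
by split; [rewrite -h1 e h3 | rewrite -h2 e h4].
Qed.

Lemma factor_dvd (pi : nat_pred) a b a' b' : pi.-nat a -> pi^'.-nat b ->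
  pi.-nat a' -> pi^'.-nat b' -> a * b %| a' * b' -> a %| a' /\ b %| b'.
Proof.
move=> ha hb ha' hb' d.
have p0 : 0 < a' * b' by rewrite muln_gt0; case/andP: ha' => -> _; case/andP: hb' => -> _.
case: (part_split ha hb) => h1 h2; case: (part_split ha' hb') => h3 h4.
by split; [rewrite -h1 -h3 | rewrite -h2 -h4]; apply: partn_dvd.
Qed.

Lemma pnat'_ge l c : (piL l)^'.-nat c -> 1 < c -> nthp l <= c.
Proof.
move=> hc c1; have pp := pdiv_prime c1.
have c0 : 0 < c by exact: ltnW.
have : pdiv c \in (piL l)^' by move/pnatP: hc => /(_ c0 _ pp (pdiv_dvd c)).
rewrite inE /= => hn.
apply: leq_trans (notpi_ge pp hn) (dvdn_leq c0 (pdiv_dvd c)).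
Qed.

Lemma r'_ge1 l i : 0 < l -> 0 < r' l i.
Proof.
move=> l0; rewrite /r' card_gt0; apply/set0Pn; exists (Di l i).
rewrite inE Di_antichain max_antichain_Di // eqxx /=.
apply/forallP => x; apply/implyP; rewrite inE => /andP [_ h].
apply: leq_trans h _; rewrite leq_mul2r nthp_ge2 orbT //.
Qed.


Definition goodS l N i : {set {set 'I_N.+1}} := [set A : {set 'I_N.+1} |
  [&& [forall x in A, (piL l).-nat x],
      [forall x in A, forall y in A, (x != y) ==> ~~ ((x:nat) %| y)],
      [forall x in A, x <= i], [forall x in A, i < nthp l * x] &
      #|A| == max_antichain_size l i]].

Definition r'set l i : {set {set 'I_i.+1}} := [set A : {set 'I_i.+1} |
      [&& antichainM l A, #|A| == max_antichain_size l i &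
          [forall x in A, i < nthp l * x]]].

Definition emb N i (A : {set 'I_i.+1}) : {set 'I_N.+1} := [set (inord (nat_of_ord x) : 'I_N.+1) | x in A].

Lemma emb_val N i (A : {set 'I_i.+1}) (y : 'I_N.+1) : i <= N ->
  (y \in emb N A) = [exists x in A, (y : nat) == x].
Proof.
move=> iN; have hx : forall x : 'I_i.+1, (x : nat) < N.+1.
  by move=> x; apply: leq_trans (ltn_ord x) _; rewrite ltnS.
apply/imsetP/existsP => [[x xA ->]|[x /andP [xA /eqP e]]].
  exists x. by rewrite xA inordK ?hx ?eqxx.
exists x => //; apply: val_inj => /=; rewrite inordK ?e ?hx //.
Qed.

Lemma emb_good l N i (A : {set 'I_i.+1}) : i <= N -> A \in r'set l i -> emb N A \in goodS l N i.
Proof.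
move=> iN; rewrite inE => /and3P [/andP [hM hA] hc hq].
have hx : forall x : 'I_i.+1, (x : nat) < N.+1.
  by move=> x; apply: leq_trans (ltn_ord x) _; rewrite ltnS.
have vv : forall x : 'I_i.+1, ((inord x : 'I_N.+1) : nat) = x by move=> x; rewrite inordK ?hx.
have inj : {in A &, injective (fun x : 'I_i.+1 => (inord x : 'I_N.+1))}.
  by move=> x y _ _ /(congr1 (@nat_of_ord _)); rewrite !vv => /val_inj.
rewrite inE; apply/and5P; split.
- apply/forallP => y; apply/implyP => /imsetP [x xA ->]; rewrite vv.
  by move/forallP: hM => /(_ x) /implyP /(_ xA).
- apply/forallP => y; apply/implyP => /imsetP [x xA ->].
  apply/forallP => z; apply/implyP => /imsetP [w wA ->]; rewrite !vv.
  apply/implyP => ne; have ne' : x != w by apply: contra ne => /eqP ->.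
  by move/forallP: hA => /(_ x) /implyP /(_ xA) /forallP /(_ w) /implyP /(_ wA) /implyP /(_ ne').
- apply/forallP => y; apply/implyP => /imsetP [x xA ->]; rewrite vv -ltnS; exact: ltn_ord.
- apply/forallP => y; apply/implyP => /imsetP [x xA ->]; rewrite vv.
  by move/forallP: hq => /(_ x) /implyP /(_ xA).
- by rewrite /emb card_in_imset.
Qed.

Lemma emb_inj N i : i <= N -> injective (@emb N i).
Proof.
move=> iN.
have hx : forall x : 'I_i.+1, (x : nat) < N.+1.
  by move=> x; apply: leq_trans (ltn_ord x) _; rewrite ltnS.
have inj : injective (fun x : 'I_i.+1 => (inord x : 'I_N.+1)).
  by move=> x y /(congr1 (@nat_of_ord _)); rewrite !inordK ?hx // => /val_inj.
exact: imset_inj.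
Qed.

Lemma card_goodS l N i : i <= N -> r' l i <= #|goodS l N i|.
Proof.
move=> iN; have -> : r' l i = #|r'set l i| by [].
rewrite -(card_imset _ (emb_inj iN)); apply: subset_leq_card.
apply/subsetP => _ /imsetP [A hA ->]; exact: emb_good.
Qed.

Lemma Di_r'set l i : 0 < l -> Di l i \in r'set l i.
Proof.
move=> l0; rewrite inE Di_antichain max_antichain_Di // eqxx /=.
apply/forallP => x; apply/implyP; rewrite inE => /andP [_ h].
apply: leq_trans h _; rewrite leq_mul2r nthp_ge2 orbT //.
Qed.


Definition FF l N (b : 'I_N.+1) : {set {set 'I_N.+1}} :=
  if (piL l)^'.-nat b then goodS l N (N %/ b) else [set set0].

Definition Fam l N : {set {ffun 'I_N.+1 -> {set 'I_N.+1}}} :=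
  [set F : {ffun 'I_N.+1 -> {set 'I_N.+1}} | F \in family (fun b : 'I_N.+1 => FF l b)].

Lemma card_Fam l N : #|Fam l N| = \prod_(b : 'I_N.+1) #|FF l b|.
Proof.
rewrite cardsE card_family.
rewrite /image_mem.
rewrite foldrE big_map big_enum; apply: eq_bigl => b; by rewrite inE.
Qed.

Definition Phi N (F : {ffun 'I_N.+1 -> {set 'I_N.+1}}) : {set 'I_N.+1} :=
  [set m : 'I_N.+1 | [exists b : 'I_N.+1, [exists a : 'I_N.+1,
     (a \in F b) && ((m : nat) == a * b)]]].

Lemma fam_elem l N F (b a : 'I_N.+1) : F \in Fam l N -> a \in F b ->
  [/\ (piL l)^'.-nat b, (piL l).-nat a, a * b <= N, N < nthp l * (a * b) &
      F b \in goodS l N (N %/ b)].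
Proof.
rewrite inE => /familyP /(_ b); rewrite /FF; case: ifP => hb hF aF; last first.
  by move: hF aF; rewrite inE => /eqP ->; rewrite inE.
have b0 : 0 < (b : nat) by case/andP: hb.
move: (hF); rewrite inE => /and5P [h1 _ h3 h4 _].
split => //.
- by move/forallP: h1 => /(_ a) /implyP /(_ aF).
- by rewrite -leq_divRL //; move/forallP: h3 => /(_ a) /implyP /(_ aF).
- by rewrite mulnA -ltn_divLR //; move/forallP: h4 => /(_ a) /implyP /(_ aF).
- by move: hF; rewrite inE.
Qed.

Lemma fam_card l N F (b : 'I_N.+1) : F \in Fam l N ->
  #|F b| = if (piL l)^'.-nat b then max_antichain_size l (N %/ b) else 0.
Proof.
rewrite inE => /familyP /(_ b); rewrite /FF; case: ifP => hb hF.
  by move: hF; rewrite inE => /and5P [_ _ _ _ /eqP].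
by move: hF; rewrite inE => /eqP ->; rewrite cards0.
Qed.

Lemma Phi_card l N F : F \in Fam l N -> #|Phi F| = \sum_(b : 'I_N.+1) #|F b|.
Proof.
move=> hF.
pose Pairs := [set p : 'I_N.+1 * 'I_N.+1 | p.2 \in F p.1].
pose h (p : 'I_N.+1 * 'I_N.+1) : 'I_N.+1 := inord (p.2 * p.1).
have hv : forall p, p \in Pairs -> (h p : nat) = p.2 * p.1.
  move=> [b a]; rewrite inE /= => aF; rewrite inordK //.
  by case: (fam_elem hF aF) => _ _ ? _ _; rewrite ltnS.
have -> : Phi F = h @: Pairs.
  apply/setP => m; rewrite inE; apply/existsP/imsetP => [[b /existsP [a /andP [aF /eqP e]]]|[[b a] pP ->]].
  - exists (b, a); first by rewrite inE.
    by apply: val_inj; rewrite /= hv ?inE // e.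
  - exists b; apply/existsP; exists a; rewrite hv //=; rewrite inE /= in pP; by rewrite pP eqxx.
rewrite card_in_imset; last first.
  move=> [b a] [b' a'] p1 p2 e; move: (congr1 (@nat_of_ord _) e); rewrite !hv //= => e'.
  rewrite inE /= in p1; rewrite inE /= in p2.
  case: (fam_elem hF p1) => hb ha _ _ _; case: (fam_elem hF p2) => hb' ha' _ _ _.
  case: (factor_uniq ha hb ha' hb' e') => /val_inj -> /val_inj -> //.
rewrite -sum1_card.
rewrite (eq_bigl (fun p => p.2 \in F p.1)); last by move=> p; rewrite inE.
rewrite -(pair_big_dep xpredT (fun b a => a \in F b) (fun _ _ => 1)) /=.
by apply: eq_bigr => b _; rewrite sum1_card.
Qed.

Lemma Phi_mem l N F (m : 'I_N.+1) : F \in Fam l N -> m \in Phi F ->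
  exists b a : 'I_N.+1, [/\ a \in F b, (m : nat) = a * b, (piL l)^'.-nat b, (piL l).-nat a &
     N < nthp l * m].
Proof.
move=> hF; rewrite inE => /existsP [b /existsP [a /andP [aF /eqP e]]].
case: (fam_elem hF aF) => hb ha _ hq _.
by exists b, a; split => //; rewrite e.
Qed.

Lemma Phi_target l n F : F \in Fam l n.*2 ->
  [&& primitive_set (Phi F) & [forall x in Phi F, n.*2 < nthp l * x]].
Proof.
move=> hF; apply/andP; split; last first.
  apply/forallP => x; apply/implyP => /(Phi_mem hF) [b [a [_ _ _ _ h]]] //.
apply/andP; split.
  apply/forallP => x; apply/implyP => /(Phi_mem hF) [b [a [_ e hb ha _]]].
  by rewrite e muln_gt0; case/andP: hb => -> _; case/andP: ha => -> _.
apply/forallP => x; apply/implyP => /(Phi_mem hF) [b [a [aF ex hb ha hqx]]].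
apply/forallP => y; apply/implyP => /(Phi_mem hF) [b' [a' [aF' ey hb' ha' hqy]]].
apply/implyP => ne; apply/negP => d.
rewrite ex ey in d.
case: (factor_dvd ha hb ha' hb' d) => da db.
have y0 : 0 < (y : nat) by rewrite ey muln_gt0; case/andP: hb' => -> _; case/andP: ha' => -> _.
have yN : (y : nat) <= n.*2 by rewrite -ltnS ltn_ord.
case: (eqVneq b b') => [ebb|nbb].
- subst b'.
  case: (fam_elem hF aF) => _ _ _ _; rewrite inE => /and5P [_ hA _ _ _].
  have nea : a != a'.
    apply: contra ne => /eqP eaa; apply/eqP; apply: val_inj; by rewrite /= ex ey eaa.
  by move/forallP: hA => /(_ a) /implyP /(_ aF) /forallP /(_ a') /implyP /(_ aF') /implyP /(_ nea) /negP.
- case/dvdnP: db => c ec.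
  have b0 : 0 < (b : nat) by case/andP: hb.
  have hc : (piL l)^'.-nat c.
    by apply: (pnat_dvd (m := c) (n := b')) => //; rewrite ec dvdn_mulr.
  have c1 : 1 < c.
    case: c ec hc => [|[|c]] ec hc //.
    by move: nbb; rewrite -(inj_eq val_inj) /= ec mul1n eqxx.
  have qc := pnat'_ge hc c1.
  have a0 : (a : nat) <= a' by apply: dvdn_leq => //; case/andP: ha'.
  have : nthp l * x <= y.
    rewrite ex ey ec; apply: (@leq_trans (c * (a * b))); first by apply: leq_mul.
    by rewrite mulnCA; apply: leq_mul.
  lia.
Qed.

Lemma Phi_sub l N F G (b a : 'I_N.+1) : F \in Fam l N -> G \in Fam l N ->
  Phi F \subset Phi G -> a \in F b -> a \in G b.
Proof.
move=> hF hG sub aF.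
case: (fam_elem hF aF) => hb ha hN _ _.
pose m : 'I_N.+1 := inord (a * b).
have mv : (m : nat) = a * b by rewrite inordK // ltnS.
have : m \in Phi F.
  by rewrite inE; apply/existsP; exists b; apply/existsP; exists a; rewrite aF mv eqxx.
move/(subsetP sub) => /(Phi_mem hG) [b' [a' [aG e hb' ha' _]]].
rewrite mv in e.
by case: (factor_uniq ha hb ha' hb' e) => /val_inj -> /val_inj ->.
Qed.

Lemma Phi_inj l N : {in Fam l N &, injective (@Phi N)}.
Proof.
move=> F G hF hG e; apply/ffunP => b; apply/setP => a.
apply/idP/idP; apply: (@Phi_sub l) => //; by rewrite e.
Qed.

Definition F0 l N : {ffun 'I_N.+1 -> {set 'I_N.+1}} :=
  [ffun b : 'I_N.+1 => if (piL l)^'.-nat b then emb N (Di l (N %/ b)) else set0].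

Lemma F0_fam l N : 0 < l -> F0 l N \in Fam l N.
Proof.
move=> l0; rewrite inE; apply/familyP => b; rewrite /FF ffunE; case: ifP => hb.
  apply: emb_good; [exact: leq_div | exact: Di_r'set].
by rewrite inE.
Qed.

Lemma Phi_F0 l n : 0 < l -> Phi (F0 l n.*2) = [set m : 'I_(n.*2).+1 | n < m].
Proof.
move=> l0; apply/setP => m; rewrite !inE.
set N := n.*2.
apply/idP/idP.
- move/existsP => [b /existsP [a /andP [aF /eqP e]]].
  move: aF; rewrite ffunE; case: ifP => hb; last by rewrite inE.
  have b0 : 0 < (b : nat) by case/andP: hb.
  rewrite emb_val ?leq_div // => /existsP [x /andP [xD /eqP ax]].
  move: xD; rewrite inE => /andP [_ hx].
  move: hx; rewrite -ax ltn_divLR // => h.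
  rewrite e; move: (a : nat) (b : nat) h => a' b' h.
  have : N = n.*2 by []. rewrite -muln2; lia.
- move=> nm.
  have m0 : 0 < (m : nat) by apply: leq_ltn_trans nm.
  have mN : (m : nat) <= N by rewrite -ltnS.
  pose b : 'I_N.+1 := inord (m`_(piL l)^').
  pose a : 'I_N.+1 := inord (m`_(piL l)).
  have eC := partnC (piL l) m0.
  have bm : m`_(piL l)^' <= m.
    by apply: dvdn_leq => //; rewrite -{2}eC dvdn_mull.
  have am : m`_(piL l) <= m.
    by apply: dvdn_leq => //; rewrite -{2}eC dvdn_mulr.
  have bv : (b : nat) = m`_(piL l)^' by rewrite inordK // ltnS; apply: leq_trans bm _.
  have av : (a : nat) = m`_(piL l) by rewrite inordK // ltnS; apply: leq_trans am _.
  apply/existsP; exists b; apply/existsP; exists a.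
  rewrite av bv eC eqxx andbT ffunE bv part_pnat /=.
  have b0 : 0 < m`_(piL l)^' by rewrite part_gt0.
  rewrite emb_val ?leq_div //.
  have aq : m`_(piL l) < (N %/ m`_(piL l)^').+1.
    by rewrite ltnS leq_divRL // eC.
  apply/existsP; exists (Ordinal aq); rewrite /= av eqxx andbT inE part_pnat /=.
  rewrite ltn_divLR // -mulnA eC; change (n.*2 < 2 * m); by rewrite mul2n ltn_double.
Qed.

Lemma card_gtn n : #|[set m : 'I_(n.*2).+1 | n < m]| = n.
Proof.
rewrite -sum1_card (eq_bigl (fun m : 'I_(n.*2).+1 => n < m)); last by move=> m; rewrite inE.
rewrite big_mkcond /=.
rewrite -(big_mkord xpredT (fun i => if n < i then 1 else 0)).
rewrite (big_cat_nat (n := n.+1)) //=; last by rewrite ltnS -addnn leq_addr.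
rewrite big1_seq; last by move=> i /andP [_]; rewrite mem_iota add0n ltnS => /andP [_ h]; rewrite ltnNge h.
rewrite add0n (eq_big_nat _ _ (F2 := fun _ => 1)); last by move=> i /andP [h _]; rewrite h.
by rewrite sum_nat_const_nat muln1 subSS -addnn addnK.
Qed.

Lemma fq_ge l n : 0 < l ->
  \prod_(b : 'I_(n.*2).+1 | (piL l)^'.-nat b) r' l (n.*2 %/ b) <= fqP (nthp l) n.
Proof.
move=> l0.
apply: (@leq_trans #|Fam l n.*2|).
  rewrite card_Fam big_mkcond /=; apply: leq_prod => b _.
  rewrite /FF; case: ifP => hb; last by rewrite cards1.
  apply: card_goodS; exact: leq_div.
rewrite -(card_in_imset (@Phi_inj l n.*2)).
rewrite /fqP /prim_count; apply: subset_leq_card; apply/subsetP => _ /imsetP [F hF ->].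
rewrite inE; case/andP: (Phi_target hF) => -> ->; rewrite andbT /=.
rewrite (Phi_card hF) (eq_bigr (fun b => #|F0 l n.*2 b|)); last first.
  by move=> b _; rewrite (fam_card _ hF) (fam_card _ (F0_fam _ l0)).
by rewrite -(Phi_card (F0_fam _ l0)) Phi_F0 // card_gtn.
Qed.


Definition cnt l N i := #|[pred b : 'I_N.+1 | (piL l)^'.-nat b && (N %/ b == i)]|.

Lemma part_prod (N : nat) (P : pred 'I_N.+1) (f : nat -> nat) (g : 'I_N.+1 -> nat) K :
  \prod_(b | P b && (0 < g b <= K)) f (g b) =
  \prod_(i < K) f i.+1 ^ #|[pred b | P b && (g b == i.+1)]|.
Proof.
elim: K => [|K IH].
  rewrite big_ord0 big_pred0 // => b; case: (g b) => [|x]; rewrite ?andbF //= ltn0 andbF.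
rewrite big_ord_recr /= -IH (bigID (fun b => g b == K.+1)) /= mulnC.
congr (_ * _).
  apply: eq_bigl => b; case: (P b); rewrite //=.
  case: (eqVneq (g b) K.+1) => [->|ne] /=; first by rewrite ltnn andbF.
  by rewrite andbT [g b <= _]leq_eqVlt (negbTE ne) /= ltnS.
rewrite -prod_nat_const; apply: eq_big => b.
  rewrite inE; case: (P b) => //=; case: (eqVneq (g b) K.+1) => [->|ne] //=; by rewrite ?andbF ?andbT ?ltnSn.
by move=> /andP [_ /eqP ->].
Qed.

Lemma prod_drop I (r : seq I) (P Q : pred I) (E : I -> nat) :
  (forall i, P i -> 0 < E i) ->
  \prod_(i <- r | P i && Q i) E i <= \prod_(i <- r | P i) E i.
Proof.
move=> hE; rewrite [X in _ <= X](bigID Q) /=.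
rewrite -[X in X <= _]muln1 leq_mul2l; apply/orP; right.
apply: prodn_cond_gt0 => i /andP [hp _]; exact: hE.
Qed.

Lemma fq_ge2 l n K : 0 < l ->
  \prod_(i < K) r' l i.+1 ^ cnt l n.*2 i.+1 <= fqP (nthp l) n.
Proof.
move=> l0; apply: leq_trans (fq_ge n l0).
rewrite /cnt -(part_prod _ (fun i => r' l i) (fun b => n.*2 %/ b)).
apply: prod_drop => i _; exact: r'_ge1.
Qed.

Lemma fq_le_f q n : fqP q n <= fP n.
Proof.
apply: subset_leq_card; apply/subsetP => A; rewrite !inE => /and3P [-> -> _].
apply/forallP => x; by apply/implyP.
Qed.


Definition PP l := \prod_(j < l) nthp j.

Lemma PP_gt0 l : 0 < PP l.
Proof. rewrite /PP prodn_gt0 // => j; exact: ltnW (nthp_ge2 j). Qed.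

Lemma block_sum P x : 0 < P -> \sum_(x <= d < x + P) coprime d P = totient P.
Proof.
move=> P0; elim: x => [|x IH].
  rewrite add0n totient_count_coprime; apply: eq_bigr => d _; by rewrite coprime_sym.
have e1 : \sum_(x <= d < (x + P).+1) coprime d P = coprime x P + \sum_(x.+1 <= d < x.+1 + P) coprime d P.
  rewrite (big_cat_nat (n := x.+1)) //= ?big_nat1 ?addSn //; lia.
have e2 : \sum_(x <= d < (x + P).+1) coprime d P = \sum_(x <= d < x + P) coprime d P + coprime (x + P) P.
  by rewrite big_nat_recr //= leq_addr.
have e3 : coprime (x + P) P = coprime x P.
  by rewrite /coprime gcdnC gcdnDr gcdnC.
by move: e1; rewrite e2 e3 IH; lia.
Qed.

Lemma blocks_sum P x k : 0 < P -> \sum_(x <= d < x + k * P) coprime d P = k * totient P.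
Proof.
move=> P0; elim: k => [|k IH]; first by rewrite mul0n addn0 big_geq.
rewrite (big_cat_nat (n := x + k * P)) //=; last by rewrite leq_add2l leq_mul2r leqnSn orbT.
  have -> : x + k.+1 * P = (x + k * P) + P by rewrite mulSn; lia.
  rewrite IH block_sum // mulSn; lia.

by rewrite leq_addr.
Qed.

Lemma piL_S l p : (p \in piL l.+1) = (p \in piL l) || (p == nthp l).
Proof.
by rewrite !inE -[l.+1]addn1 iotaD has_cat /= orbF add0n.
Qed.

Lemma pi'_S l b : 0 < b ->
  (piL l.+1)^'.-nat b = (piL l)^'.-nat b && ~~ (nthp l %| b).
Proof.
move=> b0; apply/idP/andP => [h|[h1 h2]].
- split.
  + apply/pnatP => // p pp pb; move/pnatP: h => /(_ b0 p pp pb) /negP h.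
    apply/negP => hl; apply: h; by rewrite piL_S hl.
  + apply/negP => d; move/pnatP: h => /(_ b0 _ (nthp_prime l) d) /negP h.
    apply: h; by rewrite piL_S eqxx orbT.
- apply/pnatP => // p pp pb; apply/negP; rewrite piL_S => /orP [hl|/eqP hp].
    by move/pnatP: h1 => /(_ b0 p pp pb) /negP.
  by move: h2; rewrite -hp pb.
Qed.

Lemma pi'_coprime l b : 0 < b -> (piL l)^'.-nat b = coprime b (PP l).
Proof.
move=> b0; elim: l => [|l IH].
  rewrite /PP big_ord0 coprimen1; apply/pnatP => // p pp _.
rewrite pi'_S // IH /PP big_ord_recr /= coprimeMr; congr (_ && _).
by rewrite coprime_sym prime_coprime // nthp_prime.
Qed.

Lemma div_eq_i N i b : 0 < i -> N %/ i.+1 < b -> b <= N %/ i -> N %/ b = i.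
Proof.
move=> i0 h1 h2; have b0 : 0 < b by apply: leq_ltn_trans h1.
apply/eqP; rewrite eqn_leq; apply/andP; split.
- by rewrite -ltnS ltn_divLR // mulnC -ltn_divLR.
- by rewrite leq_divRL // mulnC -leq_divRL.
Qed.

Lemma cnt_ge l N i : 0 < i ->
  ((N %/ i - N %/ i.+1) %/ PP l) * totient (PP l) <= cnt l N i.
Proof.
move=> i0; set u := N %/ i.+1; set v := N %/ i; set k := (v - u) %/ PP l.
have P0 := PP_gt0 l.
have kP : k * PP l <= v - u by exact: leq_divM.
have uv : u <= v by rewrite leq_div2l.
have vN : v <= N by exact: leq_div.
rewrite /cnt -sum1_card big_mkcond /=.
rewrite -(big_mkord xpredT (fun b => if (piL l)^'.-nat b && (N %/ b == i) then 1 else 0)).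
rewrite (big_cat_nat (n := u.+1)) //=; last by lia.
rewrite (big_cat_nat (m := u.+1) (n := u.+1 + k * PP l)) //=; [|lia|lia].
rewrite -(blocks_sum u.+1 k P0).
apply: (@leq_trans (\sum_(u.+1 <= i0 < u.+1 + k * PP l)
    (if (piL l)^'.-nat i0 && (N %/ i0 == i) then 1 else 0))); last first.
  set X := \sum_(u.+1 <= _ < _) _; lia.
rewrite leq_eqVlt; apply/orP; left; apply/eqP.
apply: eq_big_nat => b /andP [h1 h2].
have bv : b <= v by lia.
rewrite pi'_coprime ?(div_eq_i i0 h1 bv) ?eqxx ?andbT; first by case: coprime.
lia.
Qed.


Lemma nthp_notin l : nthp l \notin piL l.
Proof.
rewrite in_piL; apply/existsP => [[j /eqP e]].
have := nthp_mono (ltn_ord j); rewrite -e ltnn //.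
Qed.

Lemma coprime_PP_nthp l : coprime (PP l) (nthp l).
Proof.
rewrite coprime_sym -pi'_coprime ?pnatE ?nthp_prime ?prime_gt0 ?nthp_prime //. exact: nthp_notin.

Qed.



Local Open Scope R_scope.



Lemma real_step C K F P V U I N : 0 <= F <= P -> 1 <= P -> 1 <= I -> K*F <= C ->
  V - U < (K+1)*P -> N < (V+1)*I -> U*(I+1) <= N ->
  N * (F/P) / (I*(I+1)) - 2*P <= C.
Proof.
intros [F0 FP] P1 I1 hC hVU hN hU.
set x := N / (I * (I+1)).
assert (hex : x = N / I - N / (I+1)) by (unfold x; field; lra).
assert (h1 : N / I < V + 1).
{ apply (Rmult_lt_reg_r I); [lra|]. unfold Rdiv; rewrite Rmult_assoc Rinv_l; lra. }
assert (h2 : U <= N / (I+1)).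
{ apply (Rmult_le_reg_r (I+1)); [lra|]. unfold Rdiv; rewrite Rmult_assoc Rinv_l; lra. }
assert (hx : x < V - U + 1) by lra.
set e := F / P.
assert (e0 : 0 <= e) by (unfold e; apply Rmult_le_pos; [lra | left; apply Rinv_0_lt_compat; lra]).
assert (e1 : e <= 1).
{ unfold e; apply (Rmult_le_reg_r P); [lra|]. unfold Rdiv; rewrite Rmult_assoc Rinv_l; lra. }
assert (eq1 : N * e / (I * (I+1)) = x * e) by (unfold x; field; lra).
rewrite eq1.
assert (h3 : x * e <= (V - U + 1) * e) by (apply Rmult_le_compat_r; lra).
assert (h4 : (V - U) * e <= (K+1) * F).
{ unfold e. replace ((V - U) * (F / P)) with ((V - U) / P * F) by (field; lra).
  apply Rmult_le_compat_r; [lra|]. apply (Rmult_le_reg_r P); [lra|].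
  unfold Rdiv; rewrite Rmult_assoc Rinv_l; lra. }
nra.
Qed.

Lemma totient_PP l : INR (totient (PP l)) = INR (PP l) * euler_factor l.
Proof.
elim: l => [|l IH].
  by rewrite /PP big_ord0 /euler_factor /= Rmult_1_r.
have -> : PP l.+1 = (PP l * nthp l)%N by rewrite /PP big_ord_recr.
rewrite totient_coprime ?coprime_PP_nthp // (totient_prime (nthp_prime l)).
rewrite -multE !mult_INR IH.
have -> : euler_factor l.+1 = euler_factor l * (1 - / INR (nthp l)).
  by rewrite /euler_factor /= subn1.
have p1 : (1 <= nthp l)%N by apply: ltnW (nthp_ge2 l).
have -> : INR (nthp l).-1 = INR (nthp l) - 1.
  rewrite (_ : nthp l = (nthp l).-1.+1) ?S_INR; [simpl; lra | lia].
have hp : INR (nthp l) <> 0 by apply: not_0_INR; lia.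
field; exact: hp.
Qed.

Lemma le_INR' (a b : nat) : (a <= b)%N -> INR a <= INR b.
Proof. by move=> h; apply: le_INR; apply/leP. Qed.

Lemma lt_INR' (a b : nat) : (a < b)%N -> INR a < INR b.
Proof. by move=> h; apply: lt_INR; apply/ltP. Qed.

Lemma INR_mul (a b : nat) : INR (a * b)%N = INR a * INR b.
Proof. by rewrite -multE mult_INR. Qed.

Lemma INR_add (a b : nat) : INR (a + b)%N = INR a + INR b.
Proof. by rewrite -plusE plus_INR. Qed.

Lemma totient_le n : (totient n <= n)%N.
Proof.
rewrite totient_count_coprime; apply: (@leq_trans (\sum_(0 <= d < n) 1)%N).
  by apply: leq_sum => d _; case: coprime.
by rewrite sum_nat_const_nat muln1 subn0.
Qed.

Lemma cnt_real l N i : (1 <= i)%N ->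
  INR N * euler_factor l / (INR i * (INR i + 1)) - 2 * INR (PP l) <= INR (cnt l N i).
Proof.
move=> i0.
set u := (N %/ i.+1)%N; set v := (N %/ i)%N; set k := ((v - u) %/ PP l)%N.
have P0 := PP_gt0 l.
have hP : INR (PP l) <> 0 by apply: not_0_INR; lia.
have ee : euler_factor l = INR (totient (PP l)) / INR (PP l).
  by rewrite totient_PP; field.
rewrite ee.
have uv : (u <= v)%N by rewrite leq_div2l.
apply: (@real_step _ (INR k) _ _ (INR v) (INR u)).
- split; [exact: pos_INR | apply: le_INR'; exact: totient_le].
- by rewrite -[1]/(INR 1); apply: le_INR'.
- by rewrite -[1]/(INR 1); apply: le_INR'.
- rewrite -INR_mul; apply: le_INR'; exact: cnt_ge.
- have h := ltn_ceil (v - u) P0.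
  have := lt_INR' h; rewrite INR_mul -addn1 INR_add -[INR 1]/1.
  by rewrite -minusE minus_INR; last by apply/leP.
- have h := ltn_ceil N (ltn0Sn i.-1); rewrite prednK // in h.
  by have := lt_INR' h; rewrite INR_mul -addn1 INR_add -[INR 1]/1.
- have h : (u * i.+1 <= N)%N by exact: leq_divM.
  by have := le_INR' h; rewrite INR_mul -addn1 INR_add -[INR 1]/1.
Qed.



Lemma INR_exp (a b : nat) : INR (a ^ b)%N = INR a ^ b.
Proof. elim: b => [|b IH] //; by rewrite expnS INR_mul IH /= Rmult_comm. Qed.

Lemma prod_INR (f : nat -> nat) K :
  INR (\prod_(i < K) f i.+1)%N = prodR1 (fun i => INR (f i)) K.
Proof. elim: K => [|K IH]; first by rewrite big_ord0. by rewrite big_ord_recr INR_mul IH. Qed.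

Lemma prodR1_ext f g K : (forall i, f i = g i) -> prodR1 f K = prodR1 g K.
Proof. move=> h; elim: K => [|K IH] //=; by rewrite IH h. Qed.

Lemma prodR1_mul f g K : prodR1 f K * prodR1 g K = prodR1 (fun i => f i * g i) K.
Proof. elim: K => [|K IH] /=; first lra. rewrite -IH; ring. Qed.

Lemma prodR1_pow f K n : prodR1 f K ^ n = prodR1 (fun i => f i ^ n) K.
Proof. elim: K => [|K IH] /=; first by rewrite pow1. by rewrite Rpow_mult_distr IH. Qed.

Lemma prodR1_le f g K : (forall i, (1 <= i <= K)%N -> 0 <= f i <= g i) ->
  prodR1 f K <= prodR1 g K.
Proof.
elim: K => [|K IH] h /=; first lra.
have h1 : prodR1 f K <= prodR1 g K by apply: IH => i /andP [a b]; apply: h; rewrite a /=; lia.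
have h0 : 0 <= prodR1 f K.
  have h' : forall i, (1 <= i <= K)%N -> 0 <= f i.
    by move=> i /andP [a b]; case: (h i); rewrite ?a //=; lia.
  clear IH h1 h; elim: K h' => [|k IHk] h' /=; first lra.
  apply: Rmult_le_pos; first by apply: IHk => i /andP [a b]; apply: h'; rewrite a /=; lia.
  by apply: h'; rewrite leqnn.
have hK : (1 <= K.+1 <= K.+1)%N by rewrite leqnn.
case: (h K.+1 hK) => a b.
apply: Rmult_le_compat => //.
Qed.

Lemma prodR1_pos f K : (forall i, (1 <= i <= K)%N -> 0 < f i) -> 0 < prodR1 f K.
Proof.
elim: K => [|K IH] h /=; first lra.
apply: Rmult_lt_0_compat; last by apply: h; rewrite leqnn.
by apply: IH => i /andP [a b]; apply: h; rewrite a /=; lia.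
Qed.

Definition DKc l K := prodR1 (fun i => Rpower (INR (r' l i)) (2 * INR (PP l))) K.

Lemma DKc_pos l K : (0 < l)%N -> 0 < DKc l K.
Proof. move=> _; apply: prodR1_pos => i _; rewrite /Rpower; exact: exp_pos. Qed.

Lemma key_real l n K : (0 < l)%N ->
  c' l K ^ n <= INR (fqP (nthp l) n) * DKc l K.
Proof.
move=> l0.
have h1 : prodR1 (fun i => INR (r' l i) ^ cnt l n.*2 i) K <= INR (fqP (nthp l) n).
  have := le_INR' (fq_ge2 n K l0).
  rewrite (prod_INR (fun i => r' l i ^ cnt l n.*2 i)%N).
  by rewrite (@prodR1_ext _ (fun i => INR (r' l i) ^ cnt l n.*2 i)) // => i; rewrite INR_exp.
apply: (@Rle_trans _ (prodR1 (fun i => INR (r' l i) ^ cnt l n.*2 i) K * DKc l K)); last first.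
  apply: Rmult_le_compat_r; [left; exact: DKc_pos | exact: h1].
rewrite /DKc prodR1_mul /c' prodR1_pow; apply: prodR1_le => i /andP [i1 iK].
have r1 : 1 <= INR (r' l i) by rewrite -[1]/(INR 1); apply: le_INR'; exact: r'_ge1.
have r0 : 0 < INR (r' l i) by lra.
rewrite /rpow0; destruct (Req_EM_T (INR (r' l i)) 0) as [e|ne]; first lra.
set w := (2 / (INR i * (INR i + 1)) * euler_factor l).
have -> : Rpower (INR (r' l i)) w ^ n = Rpower (INR (r' l i)) (w * INR n).
  rewrite -Rpower_pow ?Rpower_mult //; rewrite /Rpower; exact: exp_pos.
have -> : INR (r' l i) ^ cnt l n.*2 i = Rpower (INR (r' l i)) (INR (cnt l n.*2 i)).
  by rewrite Rpower_pow.
rewrite -Rpower_plus; split; first by left; rewrite /Rpower; exact: exp_pos.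
apply: Rle_Rpower => //.
have := cnt_real l n.*2 i1.
have -> : INR n.*2 = 2 * INR n by rewrite -addnn INR_add; ring.
have hi : 0 < INR i * (INR i + 1).
  have : 1 <= INR i by rewrite -[1]/(INR 1); apply: le_INR'.
  nra.
have -> : 2 * INR n * euler_factor l / (INR i * (INR i + 1)) = w * INR n.
  have : 1 <= INR i by rewrite -[1]/(INR 1); apply: le_INR'.
  move=> hh; rewrite /w; field; split; lra.
lra.
Qed.



Lemma bernoulli h n : 0 <= h -> 1 + INR n * h <= (1 + h) ^ n.
Proof.
move=> h0; elim: n => [|n IH]; first by rewrite /=; lra.
rewrite S_INR /=.
have : 0 <= INR n * h * h by apply: Rmult_le_pos; [apply: Rmult_le_pos; [exact: pos_INR|lra]|lra].
move=> hh; have : (1 + INR n * h) * (1 + h) <= (1 + h) ^ n * (1 + h) by apply: Rmult_le_compat_r; lra.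
nra.
Qed.

Lemma eventually_pow x y D : 0 < x -> x < y ->
  exists N0 : nat, forall n, (N0 <= n)%N -> x ^ n * D <= y ^ n.
Proof.
move=> x0 xy.
set h := y / x - 1.
have h0 : 0 < h by rewrite /h; apply: Rlt_Rminus; apply: (Rmult_lt_reg_r x) => //; rewrite /Rdiv Rmult_assoc Rinv_l; lra.
set A := Rabs D + 1.
have A0 : 0 < A by have := Rabs_pos D; rewrite /A; lra.
have [N0 [hN0 N0pos]] := archimed_cor1 (h / A) (Rdiv_lt_0_compat _ _ h0 A0).
exists N0 => n hn.
have nN : INR N0 <= INR n by apply: le_INR'.
have N0p : 0 < INR N0 by apply: (lt_INR 0).
have hA : A < INR N0 * h.
  have H1 := Rmult_lt_compat_r (INR N0 * A) _ _ (Rmult_lt_0_compat _ _ N0p A0) hN0.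
  have E1 : / INR N0 * (INR N0 * A) = A by field; lra.
  have E2 : h / A * (INR N0 * A) = INR N0 * h by field; lra.
  rewrite E1 E2 in H1; exact: H1.
have yx : y = x * (1 + h) by rewrite /h; field; lra.
rewrite yx Rpow_mult_distr.
have xn : 0 < x ^ n by apply: pow_lt.
apply: Rmult_le_compat_l; first lra.
have := bernoulli n (Rlt_le _ _ h0).
have : D <= A by rewrite /A; have := Rle_abs D; lra.
have : INR N0 * h <= INR n * h by apply: Rmult_le_compat_r; lra.
lra.
Qed.

Lemma part1 l K eps : (1 <= l)%N -> 0 < eps ->
     exists N : nat, forall n : nat, (N <= n)%N ->
       (fqP (nthp l) n <= fP n)%N /\
       (Rlt 0 (Rminus (c' l K) eps) ->
          Rle (pow (Rminus (c' l K) eps) n) (INR (fqP (nthp l) n))).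
Proof.
move=> l0 e0.
case: (Rlt_dec 0 (c' l K - eps)) => hx; last first.
  by exists 0%N => n _; split; [exact: fq_le_f | move=> h; exfalso; lra].
have [N0 HN] := eventually_pow (DKc l K) hx (ltac:(lra) : c' l K - eps < c' l K).
exists N0 => n hn; split; first exact: fq_le_f.
move=> _; have h1 := HN n hn; have h2 := key_real n K l0.
have D0 := DKc_pos K l0.
apply: (Rmult_le_reg_r (DKc l K)) => //; lra.
Qed.

Theorem mainTheorem5 (l K : nat) (hl : (1 <= l)%N) (hK : (1 <= K)%N) :
  (forall eps : R, Rlt 0 eps ->
     exists N : nat, forall n : nat, (N <= n)%N ->
       (fqP (nthp l) n <= fP n)%N /\
       (Rlt 0 (Rminus (c' l K) eps) ->
          Rle (pow (Rminus (c' l K) eps) n) (INR (fqP (nthp l) n)))) /\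
  (forall eps : R, Rlt 0 eps ->
     exists N : nat, forall n : nat, (N <= n)%N ->
       Rle (Rminus (c' l K) eps) (Rpower (INR (fP n)) (Rinv (INR n)))).
Proof.
split => eps e0; first exact: part1.
case: (Rlt_dec 0 (c' l K - eps)) => hx; last first.
  exists 0%N => n _; have := exp_pos (/ INR n * ln (INR (fP n))); rewrite /Rpower; lra.
have [N0 HN] := part1 K hl e0.
exists (maxn N0 1) => n hn.
have n1 : (1 <= n)%N by apply: leq_trans hn; rewrite leq_maxr.
have [hle hpow] := HN n (leq_trans (leq_maxl _ _) hn).
have h1 := hpow hx.
have h2 : INR (fqP (nthp l) n) <= INR (fP n) by apply: le_INR'.
set x := c' l K - eps in hx h1 *.
have xn : 0 < x ^ n by apply: pow_lt.
have n0 : 0 < INR n by apply: (lt_INR 0); apply/ltP.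
have -> : x = Rpower (x ^ n) (/ INR n).
  rewrite -Rpower_pow // Rpower_mult Rinv_r ?Rpower_1 //; lra.
apply: Rle_Rpower_l; first by left; apply: Rinv_0_lt_compat.
split => //; lra.
Qed.
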